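(* Let a group $G$ act on a weighted simplicial complex $\Omega$ on $[n]$, let $\mathcal H_0,\ldots,\mathcal H_n$ be finite-dimensional Hilbert spaces with $\mathcal H_i=\mathcal H_j$ whenever $i,j$ lie in the same $G$-orbit, and $\mathcal V=\mathcal B(\mathcal H_0)\otimes\cdots\otimes\mathcal B(\mathcal H_n)$. Assume that ${\rm rank}_{(\Omega,G)}(\xi)<\infty$ for every $G$-invariant $\xi\in\mathcal V$. Then every positive semidefinite $G$-invariant $\sigma\in\mathcal V$ satisfies ${\rm puri\text{-}rank}_{(\Omega,G)}(\sigma)<\infty$.
   Context: $[n]=\{0,\ldots,n\}$. A weighted simplicial complex (wsc) on $[n]$ is a function $\Omega\colon\mathcal P([n])\to\mathbb N=\{0,1,\ldots\}$ such that $S_1\subseteq S_2$ implies $\Omega(S_1)\mid\Omega(S_2)$; simplices are sets with $\Omega(S)\neq0$, every singleton is assumed to be a simplex, facets are inclusion-maximal simplices, $\mathcal F$ is the set of facets. $\widetilde{\mathcal F}$ is the multiset containing each facet $F$ exactly $\Omega(F)$ times, with collapse map $c$; $\widetilde{\mathcal F}_i$ consists of the copies of facets containing $i$. A group action of $G$ on $\Omega$ is an action on $[n]$ with $\Omega(gS)=\Omega(S)$, together with an action on $\widetilde{\mathcal F}$ with $c(gx)=gc(x)$. $G$ acts on $\mathcal V$ (and on analogous tensor products) by permuting tensor factors according to its action on $[n]$. $\mathcal V\subseteq\mathcal B(\mathcal H_0\otimes\cdots\otimes\mathcal H_n)$, which defines positive semidefiniteness. For $\beta\colon\widetilde{\mathcal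 F}_i\to\mathcal I$, ${}^g\beta\colon\widetilde{\mathcal F}_{gi}\to\mathcal I$ is $x\mapsto\beta(g^{-1}x)$; $\alpha_{\mid i}$ is restriction to $\widetilde{\mathcal F}_i$. For a tensor product $\mathcal W=\mathcal W_0\otimes\cdots\otimes\mathcal W_n$ of vector spaces (equal along orbits), an $(\Omega,G)$-decomposition of $w\in\mathcal W$ is a finite set $\mathcal I$ and local vectors $w^{[i]}_\beta\in\mathcal W_i$ ($\beta\in\mathcal I^{\widetilde{\mathcal F}_i}$) with $w=\sum_{\alpha\in\mathcal I^{\widetilde{\mathcal F}}}w^{[0]}_{\alpha_{\mid0}}\otimes\cdots\otimes w^{[n]}_{\alpha_{\mid n}}$ and $w^{[i]}_\beta=w^{[gi]}_{{}^g\beta}$ for all $i,g,\beta$; ${\rm rank}_{(\Omega,G)}(w)$ is the minimal $|\mathcal I|$ ($\infty$ if none). An $(\Omega,G)$-purification of $\sigma\in\mathcal V$ is an element $\xi\in\mathcal B(\mathcal H_0,\mathcal H_0')\otimes\cdots\otimes\mathcal B(\mathcal H_n,\mathcal H_n')$, for some Hilbert spaces $\mathcal H_i'$, with $\sigma=\xi^*\xi$ and ${\rm rank}_{(\Omega,G)}(\xi)<\infty$; ${\rm puri\text{-}rank}_{(\Omega,G)}(\sigma)$ is the minimum of ${\rm rank}_{(\Omega,G)}(\xi)$ over all $(\Omega,G)$-purifications $\xi$ of $\sigma$ ($\infty$ if none). *)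

(* Defs.v *)
From HB Require Import structures.
From mathcomp Require Import all_boot all_order all_algebra.
Set Implicit Arguments. Unset Strict Implicit. Unset Printing Implicit Defensive.
Import Order.TTheory GRing.Theory Num.Theory.
Local Open Scope ring_scope.

(** Vertex set [n] = {0,...,n} is 'I_n.+1. *)

Definition wsc (n : nat) (Omega : {set 'I_n.+1} -> nat) : Prop :=
  (forall S1 S2 : {set 'I_n.+1}, S1 \subset S2 -> (Omega S1 %| Omega S2)%N) /\
  (forall i : 'I_n.+1, Omega [set i] <> 0%N).

Definition facet (n : nat) (Omega : {set 'I_n.+1} -> nat) (F : {set 'I_n.+1}) : bool :=
  (Omega F != 0%N) && [forall S : {set 'I_n.+1}, (F \proper S) ==> (Omega S == 0%N)].

(** The multiset F~ : each facet F appears Omega F times (copies indexed by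
    'I_(Omega F)); the collapse map c is [ctag]. *)
Definition Ftilde (n : nat) (Omega : {set 'I_n.+1} -> nat) : finType :=
  {x : {F : {set 'I_n.+1} & 'I_(Omega F)} | facet Omega (tag x)}.

Definition ctag (n : nat) (Omega : {set 'I_n.+1} -> nat) (x : Ftilde Omega)
  : {set 'I_n.+1} := tag (val x).

Definition Ftilde_i (n : nat) (Omega : {set 'I_n.+1} -> nat) (i : 'I_n.+1) : finType :=
  {x : Ftilde Omega | i \in ctag x}.

Definition restr (n : nat) (Omega : {set 'I_n.+1} -> nat) (r : nat)
  (alpha : {ffun Ftilde Omega -> 'I_r}) (i : 'I_n.+1) : {ffun Ftilde_i Omega i -> 'I_r} :=
  [ffun x => alpha (val x)].

Definition is_group (G : Type) (mul : G -> G -> G) (one : G) (inv : G -> G) : Prop :=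
  (forall a b c, mul a (mul b c) = mul (mul a b) c) /\
  (forall a, mul one a = a) /\
  (forall a, mul (inv a) a = one).

Definition is_action (G X : Type) (mul : G -> G -> G) (one : G) (act : G -> X -> X) : Prop :=
  (forall x, act one x = x) /\
  (forall g h x, act (mul g h) x = act g (act h x)).

Definition wsc_action (n : nat) (Omega : {set 'I_n.+1} -> nat)
  (G : Type) (mul : G -> G -> G) (one : G)
  (actV : G -> 'I_n.+1 -> 'I_n.+1) (actF : G -> Ftilde Omega -> Ftilde Omega) : Prop :=
  is_action mul one actV /\ is_action mul one actF /\
  (forall g (S : {set 'I_n.+1}), Omega (actV g @: S) = Omega S) /\
  (forall g (x : Ftilde Omega), ctag (actF g x) = actV g @: ctag x).

(** Multi-indices for a tensor product of spaces C^(a 0) (x) ... (x) C^(a n):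
    functions x with x i < a i (stored in a common ordinal type). *)
Definition midx (n : nat) (a : 'I_n.+1 -> nat) : finType :=
  {x : {ffun 'I_n.+1 -> 'I_(\max_(i < n.+1) a i).+1} | [forall i, (x i < a i)%N]}.

Definition midx_at (n : nat) (a : 'I_n.+1 -> nat) (x : midx a) (i : 'I_n.+1) : nat :=
  val ((val x) i).

(** Permuting tensor factors: (x o g)(i) = x (g i); for an elementary tensor
    (g . (A_0 (x) ... (x) A_n)) (x, y) = prod_i A_i (x (g i), y (g i)).
    (insubd is only used for typing: the result is a valid multi-index when a
    is constant on orbits.) *)
Definition permidx (n : nat) (a : 'I_n.+1 -> nat) (p : 'I_n.+1 -> 'I_n.+1) (x : midx a)
  : midx a := insubd x [ffun i => (val x) (p i)].

(** Elements of W_0 (x) ... (x) W_n with W_i = B(C^(b i), C^(a i)) = a i x b i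
    matrices are represented by their matrix entries w.r.t. the product bases. *)
Definition tensor (C : Type) (n : nat) (a b : 'I_n.+1 -> nat) := midx a -> midx b -> C.

Definition G_invariant (C : Type) (n : nat) (a b : 'I_n.+1 -> nat) (G : Type)
  (actV : G -> 'I_n.+1 -> 'I_n.+1) (xi : tensor C a b) : Prop :=
  forall g x y, xi (permidx (actV g) x) (permidx (actV g) y) = xi x y.

(** An (Omega,G)-decomposition of xi with index set I = 'I_r.  The local vector
    w^[i]_beta in W_i = 'M_(a i, b i) is given by its entries w i beta j k
    (only j < a i, k < b i are relevant). *)
Definition OG_decomposition (C : numClosedFieldType) (n : nat) (Omega : {set 'I_n.+1} -> nat)
  (G : Type) (inv : G -> G)
  (actV : G -> 'I_n.+1 -> 'I_n.+1) (actF : G -> Ftilde Omega -> Ftilde Omega)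
  (a b : 'I_n.+1 -> nat) (xi : tensor C a b) (r : nat)
  (w : forall i : 'I_n.+1, {ffun Ftilde_i Omega i -> 'I_r} -> nat -> nat -> C) : Prop :=
  (forall (x : midx a) (y : midx b),
      xi x y = \sum_(alpha : {ffun Ftilde Omega -> 'I_r})
                 \prod_(i < n.+1) w i (restr alpha i) (midx_at x i) (midx_at y i)) /\
  (* w^[i]_beta = w^[gi]_{g beta}, where (g beta)(y) = beta(g^-1 y) *)
  (forall (i : 'I_n.+1) (g : G) (beta : {ffun Ftilde_i Omega i -> 'I_r})
          (gbeta : {ffun Ftilde_i Omega (actV g i) -> 'I_r}),
      (forall (y : Ftilde_i Omega (actV g i)) (x : Ftilde_i Omega i),
          val x = actF (inv g) (val y) -> gbeta y = beta x) ->
      forall j k : nat, (j < a i)%N -> (k < b i)%N ->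
        w i beta j k = w (actV g i) gbeta j k).

Definition OG_rank_finite (C : numClosedFieldType) (n : nat) (Omega : {set 'I_n.+1} -> nat)
  (G : Type) (inv : G -> G)
  (actV : G -> 'I_n.+1 -> 'I_n.+1) (actF : G -> Ftilde Omega -> Ftilde Omega)
  (a b : 'I_n.+1 -> nat) (xi : tensor C a b) : Prop :=
  exists r : nat, exists w : forall i : 'I_n.+1, {ffun Ftilde_i Omega i -> 'I_r} -> nat -> nat -> C,
    OG_decomposition inv actV actF xi w.

Definition psd (C : numClosedFieldType) (n : nat) (d : 'I_n.+1 -> nat) (sigma : tensor C d d)
  : Prop :=
  forall v : midx d -> C,
    0 <= \sum_(x : midx d) \sum_(y : midx d) (v x)^* * sigma x y * v y.

Definition adj_mul (C : numClosedFieldType) (n : nat) (d d' : 'I_n.+1 -> nat)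
  (xi : tensor C d' d) : tensor C d d :=
  fun x y => \sum_(z : midx d') (xi z x)^* * xi z y.

(** puri-rank_(Omega,G)(sigma) < oo : there is an (Omega,G)-purification,
    i.e. spaces H_i' = C^(d' i) (equal along orbits) and
    xi in B(H_0,H_0') (x) ... (x) B(H_n,H_n') with sigma = xi^* xi and
    rank_(Omega,G)(xi) < oo. *)
Definition OG_purirank_finite (C : numClosedFieldType) (n : nat) (Omega : {set 'I_n.+1} -> nat)
  (G : Type) (inv : G -> G)
  (actV : G -> 'I_n.+1 -> 'I_n.+1) (actF : G -> Ftilde Omega -> Ftilde Omega)
  (d : 'I_n.+1 -> nat) (sigma : tensor C d d) : Prop :=
  exists d' : 'I_n.+1 -> nat,
    (forall g i, d' (actV g i) = d' i) /\
    exists xi : tensor C d' d,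
      sigma = adj_mul xi /\ OG_rank_finite inv actV actF xi.

(* Main.v *)
Require Import Defs.
From HB Require Import structures.
From mathcomp Require Import all_boot all_order all_algebra all_fingroup.
From mathcomp Require Import spectral sesquilinear ring.
From Stdlib Require Import FunctionalExtensionality.
Set Implicit Arguments. Unset Strict Implicit. Unset Printing Implicit Defensive.
Import Order.TTheory GRing.Theory Num.Theory.
Local Open Scope ring_scope.
Local Open Scope sesquilinear_scope.


Definition qf {C : numClosedFieldType} {N : nat} (A : 'M[C]_N) (w : 'I_N -> C) :=
  \sum_k \sum_l (w k)^* * A k l * w l.

Lemma sum_deltaR {C : numClosedFieldType} {N : nat} (F : 'I_N -> C) i (a : C) :
  \sum_l F l * (a *+ (l == i)) = F i * a.
Proof.
rewrite (bigD1 i) //= eqxx big1 ?addr0 // => l /negbTE ->.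
by rewrite mulr0n mulr0.
Qed.

Lemma sum_deltaL {C : numClosedFieldType} {N : nat} (F : 'I_N -> C) i (a : C) :
  \sum_l (a *+ (l == i)) * F l = a * F i.
Proof.
rewrite (bigD1 i) //= eqxx big1 ?addr0 // => l /negbTE ->.
by rewrite mulr0n mul0r.
Qed.

Lemma qf_two {C : numClosedFieldType} {N : nat} (A : 'M[C]_N) i j a b :
  qf A (fun k => a *+ (k == i) + b *+ (k == j)) =
  a^* * a * A i i + a^* * b * A i j + b^* * a * A j i + b^* * b * A j j.
Proof.
rewrite /qf.
have E : forall k, \sum_l (a *+ (k == i) + b *+ (k == j))^* * A k l *
     (a *+ (l == i) + b *+ (l == j)) =
   (a^* *+ (k == i) + b^* *+ (k == j)) * (A k i * a + A k j * b).
  move=> k.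
  under eq_bigr do rewrite mulrDr.
  rewrite big_split /= !sum_deltaR rmorphD /= !rmorphMn /=.
  by rewrite -!mulrA -mulrDr.
under eq_bigr do rewrite E.
under eq_bigr do rewrite mulrDl.
rewrite big_split /= !sum_deltaL.
ring.
Qed.

Lemma psd_herm {C : numClosedFieldType} {N : nat} (A : 'M[C]_N) : (forall w, 0 <= qf A w) ->
  forall i j, (A i j)^* = A j i.
Proof.
move=> H.
have R : forall w, (qf A w)^* = qf A w by move=> w; apply/CrealP/ger0_real.
have Rii : forall i, (A i i)^* = A i i.
  move=> i; have := R (fun k => 1 *+ (k == i) + 0 *+ (k == i)).
  rewrite qf_two !(rmorph0, rmorph1, mulr0, mul0r, mulr1, mul1r, addr0, add0r).
  by [].
move=> i j.
have := R (fun k => 1 *+ (k == i) + 1 *+ (k == j)).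
rewrite qf_two !rmorph1 !mul1r !rmorphD /= Rii (Rii j) => e1.
have := R (fun k => 1 *+ (k == i) + 'i *+ (k == j)).
rewrite qf_two !rmorph1 !mul1r !mulr1 conjCi !rmorphD !rmorphM /= Rii (Rii j) conjCi.
have ci : (- 'i : C)^* = 'i by rewrite -conjCi conjCK.
rewrite ci mulrN mulNr -expr2 sqrCi opprK mul1r => e2.
have e1' : (A i j)^* + (A j i)^* = A i j + A j i.
  have := e1; set x := A i i; set y := A j j => e.
  by apply: (addIr y); apply: (addrI x); rewrite !addrA.
have e2' : (A i j)^* - (A j i)^* = A j i - A i j.
  have := e2; set x := A i i; set y := A j j => e.
  have e3 : 'i * (A j i)^* - 'i * (A i j)^* = 'i * A i j - 'i * A j i.
    have hi : 'i * 'i = -1 :> C by rewrite -expr2 sqrCi.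
    move: e; rewrite !(mulrN, mulNr) hi ?opprK => e.
    apply/eqP; rewrite -subr_eq0; apply/eqP.
    move: e; set L := (X in X = _); set R' := (X in _ = X) => e.
    have -> : 'i * (A j i)^* - 'i * (A i j)^* - ('i * A i j - 'i * A j i) = L - R'.
      rewrite /L /R'; ring.
    by rewrite e subrr.
  have inz : ('i : C) != 0 by rewrite neq0Ci.
  apply: (mulfI inz); rewrite !mulrBr; rewrite -[LHS]opprK -[RHS]opprK; congr (- _).
  by rewrite opprB e3 opprB.
have two : (2 : C) != 0 by rewrite pnatr_eq0.
apply: (mulfI two).
have -> : 2 * (A i j)^* = ((A i j)^* + (A j i)^*) + ((A i j)^* - (A j i)^*) by ring.
by rewrite e1' e2'; ring.
Qed.


Lemma psd_sqrt {C : numClosedFieldType} {N : nat} (A : 'M[C]_N) : (forall w, 0 <= qf A w) ->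
  exists S : 'M[C]_N, S^t* *m S = A /\
    (forall X : 'M[C]_N, X *m A = A *m X -> X *m S = S *m X).
Proof.
move=> H.
have herm : A^t* = A.
  by apply/matrixP => i j; rewrite !mxE psd_herm.
have nA : A \is normalmx by apply/normalmxP; rewrite herm.
have Aeq := orthomx_spectralP nA.
set P := spectralmx A in Aeq.
set D := spectral_diag A in Aeq.
have Pu : P \is unitarymx by apply: spectral_unitarymx.
rewrite invmx_unitary // in Aeq.
have PPa : P *m P^t* = 1%:M by apply/unitarymxP.
have PaP : P^t* *m P = 1%:M by apply: mulmx1C.
have Dm : P *m A *m P^t* = diag_mx D.
  by rewrite Aeq !mulmxA PPa mul1mx -mulmxA PPa mulmx1.
have Dge0 : forall k, 0 <= D 0 k.
  move=> k.
  have -> : D 0 k = diag_mx D k k by rewrite mxE eqxx mulr1n.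
  rewrite -Dm.
  have := H (fun x => (P k x)^*).
  rewrite /qf.
  suff -> : (P *m A *m P^t*) k k = \sum_k0 \sum_l ((P k k0)^*)^* * A k0 l * (P k l)^* by [].
  rewrite mxE.
  under eq_bigr do rewrite mxE mulr_suml.
  rewrite exchange_big /=.
  apply: eq_bigr => x _; apply: eq_bigr => y _.
  by rewrite conjCK !mxE.
set R := \row_k sqrtC (D 0 k).
have Rc : forall k, (R 0 k)^* = R 0 k.
  by move=> k; apply/CrealP/ger0_real; rewrite mxE sqrtC_ge0.
have RR : diag_mx R *m diag_mx R = diag_mx D.
  apply/matrixP => i j; rewrite mul_diag_mx !mxE.
  by rewrite mulrnAr -expr2 sqrtCK.
have Rt : (diag_mx R)^t* = diag_mx R.
  apply/matrixP => i j; rewrite !mxE.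
  case: (eqVneq i j) => [->|nij].
    by rewrite !mulr1n; have := Rc j; rewrite mxE.
  by rewrite !mulr0n rmorph0.
exists (P^t* *m diag_mx R *m P); split.
  rewrite !trmx_mul !map_mxM trmxCK Rt.
  rewrite -!mulmxA (mulmxA P) PPa mul1mx (mulmxA (diag_mx R)) RR.
  by rewrite Aeq mulmxA.
move=> X XA.
set B := P *m X *m P^t*.
have XE : X = P^t* *m B *m P.
  by rewrite /B !mulmxA PaP mul1mx -mulmxA PaP mulmx1.
have BD : B *m diag_mx D = diag_mx D *m B.
  rewrite -Dm /B.
  rewrite -!mulmxA (mulmxA (P^t*)) PaP mul1mx.
  rewrite !mulmxA -(mulmxA P X A) XA.
  by rewrite -!mulmxA (mulmxA (P^t*)) PaP mul1mx !mulmxA.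
clearbody B.
have BR : B *m diag_mx R = diag_mx R *m B.
  apply/matrixP => k l; rewrite mul_mx_diag mul_diag_mx !mxE.
  have := BD; move/matrixP/(_ k l).
  rewrite mul_mx_diag mul_diag_mx !mxE /= => e.
  have : B k l * (D 0 l - D 0 k) = 0 by rewrite mulrBr e mulrC subrr.
  move/eqP; rewrite mulf_eq0 subr_eq0 => /orP [/eqP ->|/eqP ->]; first by rewrite mulr0 mul0r.
  by rewrite mulrC.
rewrite XE.
rewrite -!mulmxA (mulmxA P) PPa mul1mx.
rewrite (mulmxA B) BR -!mulmxA.
by rewrite (mulmxA P) PPa mul1mx.
Qed.


Lemma permidx_val n (a : 'I_n.+1 -> nat) (p : 'I_n.+1 -> 'I_n.+1)
  (Hp : forall i, a (p i) = a i) (x : midx a) :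
  val (permidx p x) = [ffun i => val x (p i)].
Proof.
rewrite /permidx insubdK //.
apply/forallP => i; rewrite ffunE.
by have := forallP (valP x) (p i); rewrite Hp.
Qed.

Lemma permidx_inj n (a : 'I_n.+1 -> nat) (p : 'I_n.+1 -> 'I_n.+1)
  (Hp : forall i, a (p i) = a i) (surj : forall j, exists i, p i = j) :
  injective (permidx p : midx a -> midx a).
Proof.
move=> x y /(congr1 val); rewrite !permidx_val // => e.
apply: val_inj; apply/ffunP => j; have [i <-] := surj j.
by move/ffunP: e => /(_ i); rewrite !ffunE.
Qed.

Local Close Scope sesquilinear_scope.

Theorem theorem3p20
  (n : nat) (Omega : {set 'I_n.+1} -> nat) (HOmega : wsc Omega)
  (G : Type) (mul : G -> G -> G) (one : G) (inv : G -> G)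
  (HG : is_group mul one inv)
  (actV : G -> 'I_n.+1 -> 'I_n.+1) (actF : G -> Ftilde Omega -> Ftilde Omega)
  (Hact : wsc_action mul one actV actF)
  (C : numClosedFieldType) (d : 'I_n.+1 -> nat)
  (Hd : forall (g : G) (i : 'I_n.+1), d (actV g i) = d i)
  (Hrank : forall xi : tensor C d d,
      G_invariant actV xi -> OG_rank_finite inv actV actF xi) :
  forall sigma : tensor C d d,
    psd sigma -> G_invariant actV sigma ->
    OG_purirank_finite inv actV actF sigma.
Proof.
move=> sigma Hpsd Hinv.
pose A : 'M[C]_#|midx d| := \matrix_(k, l) sigma (enum_val k) (enum_val l).
have HA : forall w, 0 <= qf A w.
  move=> w; have := Hpsd (fun x => w (enum_rank x)).
  rewrite /qf (reindex enum_val (onW_bij _ (@enum_val_bij (midx d)))) /=.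
  congr (0 <= _); apply: eq_bigr => k _.
  rewrite (reindex enum_val (onW_bij _ (@enum_val_bij (midx d)))) /=.
  by apply: eq_bigr => l _; rewrite !enum_valK mxE.
have [S [SA Scomm]] := psd_sqrt HA.
pose xi : tensor C d d := fun x y => S (enum_rank x) (enum_rank y).
exists d; split => //; exists xi; split.
  apply: functional_extensionality => x; apply: functional_extensionality => y.
  rewrite /adj_mul /xi.
  transitivity (A (enum_rank x) (enum_rank y)); first by rewrite mxE !enum_rankK.
  rewrite -SA mxE (reindex enum_val (onW_bij _ (@enum_val_bij (midx d)))) /=.
  by apply: eq_bigr => k _; rewrite !mxE enum_valK.
apply: Hrank => g x y.
case: HG => assoc [lid linv].
case: Hact => [[a1 a2] _].
have injg : injective (actV g).
  move=> i j e.
  by rewrite -(a1 i) -(a1 j) -(linv g) !a2 e.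
have [h _ hK] := injF_bij injg.
have surj : forall j, exists i, actV g i = j by move=> j; exists (h j); rewrite hK.
have phinj := permidx_inj (Hd g) surj.
pose phio : 'I_#|midx d| -> 'I_#|midx d| := fun k => enum_rank (permidx (actV g) (enum_val k) : midx d).
have phioinj : injective phio.
  move=> k l /enum_rank_inj /phinj; exact: enum_val_inj.
pose s := perm phioinj.
have As : forall k l, A (s k) (s l) = A k l.
  move=> k l; rewrite !mxE !permE /phio !enum_rankK; exact: Hinv.
have QA : perm_mx s *m A = A *m perm_mx s.
  rewrite -row_permE -[s in A *m perm_mx s]invgK -col_permE.
  apply/matrixP => k l; rewrite !mxE.
  by rewrite -{1}(permKV s l); have := As k ((s^-1)%g l); rewrite !mxE.
have QS := Scomm _ QA.
rewrite /xi.
have E : forall z : midx d, enum_rank (permidx (actV g) z : midx d) = s (enum_rank z).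
  by move=> z; rewrite permE /phio enum_rankK.
rewrite !E.
move/matrixP: QS => /(_ (enum_rank x) (s (enum_rank y))).
rewrite -row_permE -[s in S *m perm_mx s]invgK -col_permE !mxE permK.
by [].
Qed.
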